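(* For the dilution model with $N$ items and $K$ defectives, random Bernoulli$(1/K)$ design and maximum-likelihood decoding, in the regime $N,K\to\infty$ with $K=o(N)$, a number of tests $T=O\!\left(\frac{K\log N}{(1-u)^2}\right)$ is achievable (arbitrarily small average error probability), where $u\in[0,1)$ is the crossover probability of the Z-channel (the probability that $1$ is flipped into $0$).
   Context: Design: $N\times T$ binary matrix with i.i.d. Bernoulli$(1/K)$ entries, $X_j(t)=1$ iff item $j$ is in test $t$. Dilution model: for defective set $S$ ($|S|=K$), $Y(t)=\bigvee_{j\in S}\mathcal Z_{j,t}(X_j(t))$, where each $\mathcal Z_{j,t}$ is an independent use of a Z-channel mapping input $0$ to $0$ with probability $1$ and input $1$ to $0$ with probability $u$ and to $1$ with probability $1-u$. The ML decoder chooses a $K$-subset $S'$ maximizing $p(Y^T\mid\mathbf X_{S'})$; average error probability is averaged over the design, the channel, and $S$ uniform among $K$-subsets. *)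

(* Defs.v *)
From HB Require Import structures.
From mathcomp Require Import all_boot all_order all_algebra.
From mathcomp Require Import all_classical all_reals all_analysis.
Set Implicit Arguments. Unset Strict Implicit. Unset Printing Implicit Defensive.
Import Order.TTheory GRing.Theory Num.Theory.
Local Open Scope ring_scope.

(* A test design: X (j,t) = true iff item j is in test t. *)
Definition design (N T : nat) := {ffun 'I_N * 'I_T -> bool}.
Definition outcome (T : nat) := {ffun 'I_T -> bool}.
Definition decoder (N T : nat) := design N T -> outcome T -> {set 'I_N}.

Section Model.
Variables (R : realType) (N K T : nat) (u : R).

Definition design_prob (X : design N T) : R :=
  \prod_(p : 'I_N * 'I_T) (if X p then (K%:R)^-1 else 1 - (K%:R)^-1).

Definition npos (X : design N T) (S : {set 'I_N}) (t : 'I_T) : nat :=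
  #|[set j in S | X (j, t)]|.

(* Likelihood p(Y^T | X_S) in the dilution model: each present defective
   passes through an independent Z-channel (1 -> 0 w.p. u), then OR. *)
Definition lik (X : design N T) (S : {set 'I_N}) (Y : outcome T) : R :=
  \prod_(t : 'I_T)
    (if Y t then 1 - u ^+ npos X S t else u ^+ npos X S t).

Definition is_ML_decoder (dec : decoder N T) : Prop :=
  forall (X : design N T) (Y : outcome T),
    #|dec X Y| = K /\
    forall S' : {set 'I_N}, #|S'| = K -> lik X S' Y <= lik X (dec X Y) Y.

Definition avg_err (dec : decoder N T) : R :=
  \sum_(S : {set 'I_N} | #|S| == K)
    ('C(N, K)%:R)^-1 *
    \sum_(X : design N T) design_prob X *
      \sum_(Y : outcome T) lik X S Y * (dec X Y != S)%:R.

End Model.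

(* Main.v *)
Require Import Defs.
From HB Require Import structures.
From mathcomp Require Import all_boot all_order all_algebra.
From mathcomp Require Import all_classical all_reals all_analysis.
From mathcomp Require Import lra ring.
Import Order.TTheory GRing.Theory Num.Theory.
Local Open Scope classical_set_scope.
Local Open Scope ring_scope.


Section Gen.
Variable R : realType.

Lemma sum_ffun_prod (I : finType) (F : I -> bool -> R) :
  \sum_(g : {ffun I -> bool}) \prod_i F i (g i) = \prod_i (F i true + F i false).
Proof.
rewrite -bigA_distr_bigA /=; apply: eq_bigr => i _; by rewrite big_bool.
Qed.

Lemma sum_sets (I : finType) (q : R) :
  \sum_(A : {set I}) q ^+ #|A| = (1 + q) ^+ #|I|.
Proof.
have -> : \sum_(A : {set I}) q ^+ #|A| =
   \sum_(g : {ffun I -> bool}) \prod_i (if g i then q else 1).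
  rewrite (reindex (fun g : {ffun I -> bool} => [set i | g i]%SET)) /=.
    apply: eq_bigr => g _; rewrite -big_mkcond /= -prodr_const.
    by apply: eq_bigl => i; rewrite inE.
  exists (fun A : {set I} => [ffun i => i \in A]) => A _.
    by apply/ffunP => i; rewrite ffunE inE.
  by apply/setP => i; rewrite inE ffunE.
rewrite (@sum_ffun_prod I (fun _ (b : bool) => if b then q else 1)) -prodr_const; apply: eq_bigr => i _; by rewrite addrC.
Qed.

Lemma design_factor (I J : finType) (w : bool -> R) (g : {ffun I -> bool} -> R) :
  \sum_(X : {ffun I * J -> bool}) (\prod_p w (X p)) * \prod_(t : J) g [ffun j => X (j, t)]
  = (\sum_(x : {ffun I -> bool}) (\prod_j w (x j)) * g x) ^+ #|J|.
Proof.
rewrite -prodr_const bigA_distr_bigA /=.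
rewrite (reindex (fun f : {ffun J -> {ffun I -> bool}} => [ffun p : I * J => f p.2 p.1])) /=.
  apply: eq_bigr => f _; rewrite big_split /=; congr (_ * _).
    pose G := fun p : I * J => w ([ffun p : I * J => f p.2 p.1] p).
    rewrite -/(\prod_p G p).
    have -> : \prod_p G p = \prod_i \prod_j G (i, j) by rewrite pair_bigA; apply: eq_bigr => -[].
    rewrite exchange_big /=; apply: eq_bigr => t _.
    by apply: eq_bigr => j _; rewrite /G ffunE.
  apply: eq_bigr => t _; congr (g _); apply/ffunP => j; by rewrite !ffunE.
exists (fun X : {ffun I * J -> bool} => [ffun t => [ffun j => X (j, t)]]) => X _.
  apply/ffunP => t; apply/ffunP => j; by rewrite !ffunE.
apply/ffunP => [[j t]]; by rewrite !ffunE.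
Qed.

Lemma sqrt_prod (I : finType) (F : I -> R) : (forall i, 0 <= F i) ->
  Num.sqrt (\prod_i F i) = \prod_i Num.sqrt (F i).
Proof.
move=> F0.
pose K (a b : R) := 0 <= b /\ a = Num.sqrt b.
suff [] : K (\prod_i Num.sqrt (F i)) (\prod_i F i) by [].
apply: (big_rec2 K); first by split; rewrite ?sqrtr1.
move=> i a b _ [b0 ->]; split; first by rewrite mulr_ge0.
by rewrite sqrtrM.
Qed.

Lemma sqrt_am (a b : R) : 0 <= a -> 0 <= b -> Num.sqrt (a * b) <= (a + b) / 2.
Proof.
move=> a0 b0; rewrite sqrtrM //.
have ha := sqr_sqrtr a0; have hb := sqr_sqrtr b0.
have sa := sqrtr_ge0 a; have sb := sqrtr_ge0 b.
have := sqr_ge0 (Num.sqrt a - Num.sqrt b); nra.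
Qed.

Lemma prod_bool (I : finType) (b : I -> bool) :
  \prod_i (b i)%:R = ([forall i, b i])%:R :> R.
Proof.
case: (boolP [forall i, b i]) => [/forallP H|/forallPn [i Hi]].
  by rewrite big1 // => i _; rewrite H.
by rewrite (bigD1 i) //= (negbTE Hi) mul0r.
Qed.

End Gen.


Section Model2.
Variables (R : realType) (N K T : nat) (u : R).
Hypothesis u0 : 0 <= u.
Hypothesis u1 : u <= 1.

Definition mm (S : {set 'I_N}) (x : {ffun 'I_N -> bool}) : nat := #|[set j in S | x j]%SET|.
Definition Bh (S S' : {set 'I_N}) (x : {ffun 'I_N -> bool}) : R :=
  Num.sqrt (u ^+ mm S x * u ^+ mm S' x) + Num.sqrt ((1 - u ^+ mm S x) * (1 - u ^+ mm S' x)).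
Definition ww (b : bool) : R := if b then (K%:R)^-1 else 1 - (K%:R)^-1.
Definition rho (S S' : {set 'I_N}) : R :=
  \sum_(x : {ffun 'I_N -> bool}) (\prod_j ww (x j)) * Bh S S' x.

Lemma uX_ge0 n : 0 <= u ^+ n. Proof. exact: exprn_ge0. Qed.
Lemma uX_le1 n : u ^+ n <= 1. Proof. exact: exprn_ile1. Qed.

Lemma lik_factor_ge0 (b : bool) n : 0 <= (if b then 1 - u ^+ n else u ^+ n).
Proof. case: b; last exact: uX_ge0. by rewrite subr_ge0 uX_le1. Qed.

Lemma lik_ge0 (X : design N T) S Y : 0 <= lik u X S Y.
Proof. apply: prodr_ge0 => t _; exact: lik_factor_ge0. Qed.

Lemma npos_mm (X : design N T) S t : npos X S t = mm S [ffun j => X (j, t)].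
Proof. rewrite /npos /mm. apply: eq_card => j. by rewrite !inE ffunE. Qed.

Lemma stepA (X : design N T) S S' :
  \sum_(Y : outcome T) Num.sqrt (lik u X S Y * lik u X S' Y)
  = \prod_t Bh S S' [ffun j => X (j, t)].
Proof.
transitivity (\sum_(Y : outcome T) \prod_t Num.sqrt
   ((if Y t then 1 - u ^+ npos X S t else u ^+ npos X S t) *
    (if Y t then 1 - u ^+ npos X S' t else u ^+ npos X S' t))).
  apply: eq_bigr => Y _; rewrite /lik -big_split /= sqrt_prod //.
  by move=> t; apply: mulr_ge0; apply: lik_factor_ge0.
rewrite (@sum_ffun_prod R 'I_T (fun t b => Num.sqrt
   ((if b then 1 - u ^+ npos X S t else u ^+ npos X S t) *
    (if b then 1 - u ^+ npos X S' t else u ^+ npos X S' t)))).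
apply: eq_bigr => t _; by rewrite /Bh !npos_mm addrC.
Qed.

Lemma stepB S S' :
  \sum_(X : design N T) design_prob R K X * \prod_t Bh S S' [ffun j => X (j, t)]
  = rho S S' ^+ T.
Proof.
have := @design_factor R 'I_N 'I_T ww (Bh S S'); rewrite card_ord => <-.
by apply: eq_bigr.
Qed.



Lemma E4 : (2 <= K)%N -> expR (-4) <= (1 - (K%:R)^-1) ^+ (2 * K) :> R.
Proof.
move=> K2.
have Kpos : (0 : R) < K%:R by rewrite ltr0n; apply: leq_trans K2.
have K2r : (2 : R) <= K%:R by rewrite ler_nat.
set p := (K%:R)^-1.
have pK : p * K%:R = 1 by rewrite /p mulVf // gt_eqF.
have p0 : 0 < p by rewrite invr_gt0.
have p2 : p <= 1/2 by nra.
have h : expR (- (2 * p)) <= 1 - p.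
  have E1 := expR_ge1Dx (2 * p).
  have E0 := expR_gt0 (2 * p).
  have EE := expRxMexpNx_1 (2 * p).
  nra.
have -> : expR (-4) = expR (- (2 * p)) ^+ (2 * K).
  rewrite -expRM_natr; congr expR.
  have -> : - (2 * p) * (2 * K)%:R = - (4 * (p * K%:R)) by rewrite natrM; ring.
  by rewrite pK mulr1.
apply: lerXn2r => //; rewrite ?nnegrE ?expR_ge0 //; lra.
Qed.

Section StepC.
Variables (S S' : {set 'I_N}).
Let U := S :|: S'.
Let D := (S :\: S') :|: (S' :\: S).
Definition ee (j : 'I_N) (x : {ffun 'I_N -> bool}) : bool :=
  x j && [forall k, (k \in U) && (k != j) ==> ~~ x k].

Lemma D_sub_U j : j \in D -> j \in U.
Proof. by rewrite /D /U !inE; case: (j \in S); case: (j \in S'). Qed.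

Lemma mm_single (A : {set 'I_N}) j x : A \subset U -> ee j x ->
  mm A x = (j \in A).
Proof.
move=> AU /andP[xj /forallP H].
have H' k : k \in A -> x k = (k == j).
  move=> kA; case: eqP => [->//|/eqP kj].
  have := H k; rewrite (fintype.subsetP AU k kA) kj /=.
  by move/negbTE.
rewrite /mm; case jA: (j \in A).
  rewrite /= -(cards1 j); apply: eq_card => k; rewrite !inE.
  case kA: (k \in A) => /=; first by rewrite H'.
  by apply/esym/negbTE; apply: contraFN kA => /eqP ->.
rewrite /=; apply/eqP; rewrite cards_eq0; apply/eqP/finset.setP => k; rewrite !inE.
case kA: (k \in A) => //=; rewrite H' //.
by apply/negbTE; apply: contraFN jA => /eqP <-.
Qed.

Lemma Bh_le1 x : Bh S S' x <= 1.
Proof.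
rewrite /Bh.
have h1 := @sqrt_am R _ _ (uX_ge0 (mm S x)) (uX_ge0 (mm S' x)).
have a1 : 0 <= 1 - u ^+ mm S x by rewrite subr_ge0 uX_le1.
have a2 : 0 <= 1 - u ^+ mm S' x by rewrite subr_ge0 uX_le1.
have h2 := @sqrt_am R _ _ a1 a2.
lra.
Qed.

Lemma C1 x : Bh S S' x <= 1 - (1 - Num.sqrt u) * \sum_(j in D) (ee j x)%:R.
Proof.
case: (pickP (fun j => (j \in D) && ee j x)) => [j /andP[jD ej]|none].
  have -> : \sum_(j0 in D) (ee j0 x)%:R = 1 :> R.
    rewrite (bigD1 j) //= ej big1 ?addr0 // => j' /andP[_ j'j].
    apply/eqP; rewrite pnatr_eq0 eqb0; apply/negP => /andP[_ /forallP H].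
    have := H j; rewrite (D_sub_U _ jD) eq_sym j'j /=.
    by case/andP: ej => ->.
  have SU : S \subset U by rewrite /U finset.subsetUl.
  have S'U : S' \subset U by rewrite /U finset.subsetUr.
  rewrite /Bh (mm_single _ _ _ SU ej) (mm_single _ _ _ S'U ej).
  move: jD; rewrite /D !inE.
  case: (j \in S); case: (j \in S') => //= _;
    rewrite ?expr1 ?expr0 ?subrr ?mulr0 ?mul0r ?mulr1 ?mul1r sqrtr0; lra.
have -> : \sum_(j0 in D) (ee j0 x)%:R = 0 :> R.
  by apply: big1 => j jD; have := none j; rewrite jD /= => ->.
rewrite mulr0 subr0; exact: Bh_le1.
Qed.


Lemma C2 : \sum_(x : {ffun 'I_N -> bool}) \prod_j ww (x j) = 1.
Proof.
rewrite (@sum_ffun_prod R 'I_N (fun (_ : 'I_N) b => ww b)) big1 // => j _.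
by rewrite /ww subrKC.
Qed.

Lemma W_ge0 (x : {ffun 'I_N -> bool}) : (1 <= K)%N -> 0 <= \prod_j ww (x j).
Proof.
move=> K1; apply: prodr_ge0 => j _; rewrite /ww; case: (x j).
  by rewrite invr_ge0 ler0n.
by rewrite subr_ge0 invf_le1 // ?ler1n // ltr0n.
Qed.

Definition hb (j k : 'I_N) (b : bool) : bool :=
  if k == j then b else if k \in U then ~~ b else true.

Lemma ee_hb j x : ee j x = [forall k, hb j k (x k)].
Proof.
apply/idP/idP.
  move=> /andP[xj /forallP H]; apply/forallP => k; rewrite /hb.
  case: eqP => [->//|/eqP kj]; case: ifP => // kU.
  by have := H k; rewrite kU kj.
move=> /forallP H; apply/andP; split; first by have := H j; rewrite /hb eqxx.
apply/forallP => k; apply/implyP => /andP[kU kj].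
by have := H k; rewrite /hb (negbTE kj) kU.
Qed.

Lemma C3 j : (2 <= K)%N -> #|S| = K -> #|S'| = K ->
  (K%:R)^-1 * expR (-4) <= \sum_(x : {ffun 'I_N -> bool}) (\prod_k ww (x k)) * (ee j x)%:R.
Proof.
move=> K2 SK S'K.
have Kpos : (0 : R) < K%:R by rewrite ltr0n; apply: leq_trans K2.
set p := (K%:R)^-1.
have p0 : 0 <= p by rewrite invr_ge0 ler0n.
have p1 : p <= 1 by rewrite invf_le1 // ler1n; apply: leq_trans K2.
have -> : \sum_(x : {ffun 'I_N -> bool}) (\prod_k ww (x k)) * (ee j x)%:R =
   \sum_(x : {ffun 'I_N -> bool}) \prod_k (ww (x k) * (hb j k (x k))%:R).
  apply: eq_bigr => x _; by rewrite big_split /= prod_bool ee_hb.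
rewrite (@sum_ffun_prod R 'I_N (fun k b => ww b * (hb j k b)%:R)).
rewrite (bigD1 j) //= /hb eqxx /= /ww mulr1 mulr0 addr0 -/p.
apply: ler_wpM2l => //.
have -> : \prod_(k | k != j) (ww true * (hb j k true)%:R + ww false * (hb j k false)%:R)
   = \prod_(k | k != j) (if k \in U then 1 - p else 1).
  apply: eq_bigr => k kj; rewrite /hb (negbTE kj) /ww -/p.
  by case: (k \in U); rewrite /= ?mulr0 ?mulr1 ?add0r ?addr0 // subrKC.
rewrite -big_mkcondr /= (prodr_const [pred k | (k != j) && (k \in U)]).
apply: (le_trans (E4 K2)).
apply: ler_wiXn2l; rewrite ?subr_ge0 ?gerBl //.
apply: (@leq_trans #|U|).
  by apply: subset_leq_card; apply/fintype.subsetP => k; rewrite inE => /andP[].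
by rewrite /U cardsU SK S'K mul2n -addnn leq_subr.
Qed.

Lemma Bh_ge0 x : 0 <= Bh S S' x.
Proof. by rewrite /Bh addr_ge0 // sqrtr_ge0. Qed.

Lemma rho_ge0 : (1 <= K)%N -> 0 <= rho S S'.
Proof.
move=> K1; apply: sumr_ge0 => x _; apply: mulr_ge0; [exact: W_ge0|exact: Bh_ge0].
Qed.

Lemma rho_bound : (2 <= K)%N -> #|S| = K -> #|S'| = K ->
  rho S S' <= 1 - (1 - Num.sqrt u) * (#|D|%:R * ((K%:R)^-1 * expR (-4))).
Proof.
move=> K2 SK S'K.
have K1 : (1 <= K)%N by apply: leq_trans K2.
have c0 : 0 <= 1 - Num.sqrt u.
  by rewrite subr_ge0 -sqrtr1 ler_wsqrtr.
apply: (@le_trans _ _ (\sum_(x : {ffun 'I_N -> bool}) (\prod_j ww (x j)) *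
   (1 - (1 - Num.sqrt u) * \sum_(j in D) (ee j x)%:R))).
  apply: ler_sum => x _; apply: ler_wpM2l; [exact: W_ge0|exact: C1].
have -> : \sum_(x : {ffun 'I_N -> bool}) (\prod_j ww (x j)) *
   (1 - (1 - Num.sqrt u) * \sum_(j in D) (ee j x)%:R)
  = \sum_(x : {ffun 'I_N -> bool}) (\prod_j ww (x j)) - (1 - Num.sqrt u) *
    \sum_(j in D) \sum_(x : {ffun 'I_N -> bool}) (\prod_k ww (x k)) * (ee j x)%:R.
  rewrite [X in _ - _ * X]exchange_big /=.
  rewrite mulr_sumr -sumrB; apply: eq_bigr => x _.
  rewrite mulrBr mulr1 !mulr_sumr; congr (_ - _); apply: eq_bigr => j _; by rewrite mulrCA.
rewrite C2 lerD2l lerN2; apply: ler_wpM2l => //.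
rewrite mulr_natl -sumr_const; apply: ler_sum => j jD; exact: C3.
Qed.

End StepC.

Definition qq : R := ((N%:R) ^+ 2)^-1.
Definition DD (S S' : {set 'I_N}) := (S :\: S') :|: (S' :\: S).

Lemma c_aux (s : R) : 0 <= s -> s <= 1 -> (1 - s ^+ 2) ^+ 2 / 4 <= 1 - s.
Proof.
move=> s0 s1.
have h13 : 0 <= (1 - s) * (3 + s) by apply: mulr_ge0; lra.
have hb : (1 + s) ^+ 2 <= 4 by rewrite expr2; nra.
have hc : 0 <= s * (1 + s) ^+ 2 by rewrite mulr_ge0 ?sqr_ge0.
have h : (1 - s) * (1 + s) ^+ 2 <= 4 by nra.
have -> : (1 - s ^+ 2) ^+ 2 / 4 = (1 - s) * ((1 - s) * (1 + s) ^+ 2) / 4.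
  by rewrite !expr2; field.
nra.
Qed.

Lemma c_bound : (1 - u) ^+ 2 / 4 <= 1 - Num.sqrt u.
Proof.
have s1 : Num.sqrt u <= 1 by rewrite -sqrtr1 ler_wsqrtr.
have := @c_aux _ (sqrtr_ge0 u) s1; rewrite sqr_sqrtr //.

Qed.

Lemma pair_bound (S S' : {set 'I_N}) : (2 <= K)%N -> (1 <= N)%N -> u < 1 -> #|S| = K -> #|S'| = K ->
  8 * expR 4 * K%:R * ln (N%:R : R) / (1 - u) ^+ 2 <= T%:R ->
  rho S S' ^+ T <= qq ^+ #|DD S S'|.
Proof.
move=> K2 N1 ult1 SK S'K hT.
have K1 : (1 <= K)%N by apply: leq_trans K2.
have Kpos : (0 : R) < K%:R by rewrite ltr0n.
have Npos : (0 : R) < N%:R by rewrite ltr0n.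
have lnN : 0 <= ln (N%:R : R) by rewrite ln_ge0 // ler1n.
set d : R := #|DD S S'|%:R.
have d0 : 0 <= d by rewrite ler0n.
set y := (1 - u) ^+ 2 / 4 * (d * ((K%:R)^-1 * expR (-4))).
have e40 := expR_gt0 (-4 : R).
have hy0 : 0 <= d * ((K%:R)^-1 * expR (-4)).
  by rewrite mulr_ge0 // mulr_ge0 // ?invr_ge0 ?ler0n // ltW.
have hrho : rho S S' <= 1 - y.
  apply: (le_trans (rho_bound _ _ K2 SK S'K)); rewrite lerD2l lerN2.
  by apply: ler_wpM2r => //; exact: c_bound.
have r0 := rho_ge0 S S' K1.
apply: (@le_trans _ _ (expR (- y) ^+ T)).
  apply: lerXn2r; rewrite ?nnegrE ?expR_ge0 //.
  apply: (le_trans hrho); have := expR_ge1Dx (- y); lra.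
rewrite -expRM_natr.
have -> : qq ^+ #|DD S S'| = expR (- (ln (N%:R : R) * (2 * #|DD S S'|)%:R)).
  by rewrite expRN expRM_natr lnK ?posrE // /qq exprVn exprM.
rewrite ler_expR mulNr lerN2.
have u1' : 0 < 1 - u by rewrite subr_gt0.
have y0 : 0 <= y by rewrite /y mulr_ge0 // mulr_ge0 // ?sqr_ge0.
apply: (le_trans _ (ler_wpM2l y0 hT)).
rewrite /y expRN natrM -/d.
have E4 := expR_gt0 (4 : R).
rewrite le_eqVlt; apply/orP; left; apply/eqP; field.
by rewrite !gt_eqF.
Qed.

Lemma sum_DD (S : {set 'I_N}) (q : R) :
  \sum_(S' : {set 'I_N}) q ^+ #|DD S S'| = (1 + q) ^+ N.
Proof.
have inv A : DD S (DD S A) = A.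
  by apply/finset.setP => x; rewrite /DD !inE; case: (x \in S); case: (x \in A).
have := @sum_sets R 'I_N q; rewrite card_ord => <-.
rewrite (reindex (fun A : {set 'I_N} => DD S A)) /=.
  by apply: eq_bigr => A _; rewrite inv.
by exists (fun A : {set 'I_N} => DD S A) => A _; rewrite inv.
Qed.

Lemma pointwise (dec : decoder N T) (X : design N T) (Y : outcome T) (S : {set 'I_N}) :
  is_ML_decoder K u dec -> #|S| = K ->
  lik u X S Y * (dec X Y != S)%:R <=
  \sum_(S' | (S' != S) && (#|S'| == K)) Num.sqrt (lik u X S Y * lik u X S' Y).
Proof.
move=> ML SK.
case: eqP => [_|/eqP dS]; first by rewrite mulr0 sumr_ge0 // => S' _; exact: sqrtr_ge0.
have [cK lemax] := ML X Y.
rewrite mulr1 (bigD1 (dec X Y)) /=; last by rewrite dS cK eqxx.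
rewrite -[X in X <= _]addr0 lerD //; last by rewrite sumr_ge0 // => S' _; exact: sqrtr_ge0.
have l0 := lik_ge0 X S Y.
have E : lik u X S Y = Num.sqrt (lik u X S Y * lik u X S Y).
  by rewrite -expr2 sqrtr_sqr ger0_norm.
rewrite {1}E.
apply: ler_wsqrtr; apply: ler_wpM2l => //.
exact: lemax.
Qed.

Lemma dp_ge0 (X : design N T) : (1 <= K)%N -> 0 <= design_prob R K X.
Proof.
move=> K1; apply: prodr_ge0 => p _; case: (X p).
  by rewrite invr_ge0 ler0n.
by rewrite subr_ge0 invf_le1 // ?ler1n // ltr0n.
Qed.

Lemma S_bound (dec : decoder N T) (S : {set 'I_N}) : is_ML_decoder K u dec -> #|S| = K ->
  (2 <= K)%N -> (1 <= N)%N -> u < 1 ->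
  8 * expR 4 * K%:R * ln (N%:R : R) / (1 - u) ^+ 2 <= T%:R ->
  \sum_(X : design N T) design_prob R K X *
      \sum_(Y : outcome T) lik u X S Y * (dec X Y != S)%:R <= (1 + qq) ^+ N - 1.
Proof.
move=> ML SK K2 N1 ult1 hT.
have K1 : (1 <= K)%N by apply: leq_trans K2.
apply: (@le_trans _ _ (\sum_(X : design N T) design_prob R K X *
   \sum_(Y : outcome T) \sum_(S' | (S' != S) && (#|S'| == K))
      Num.sqrt (lik u X S Y * lik u X S' Y))).
  apply: ler_sum => X _; apply: ler_wpM2l; first exact: dp_ge0.
  apply: ler_sum => Y _; exact: pointwise.
have -> : \sum_(X : design N T) design_prob R K X *
   \sum_(Y : outcome T) \sum_(S' | (S' != S) && (#|S'| == K))
      Num.sqrt (lik u X S Y * lik u X S' Y)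
  = \sum_(S' | (S' != S) && (#|S'| == K)) rho S S' ^+ T.
  transitivity (\sum_(X : design N T) \sum_(S' | (S' != S) && (#|S'| == K))
     design_prob R K X * \sum_(Y : outcome T) Num.sqrt (lik u X S Y * lik u X S' Y)).
    by apply: eq_bigr => X _; rewrite exchange_big mulr_sumr.
  rewrite exchange_big /=; apply: eq_bigr => S' _.
  rewrite -stepB; apply: eq_bigr => X _; by rewrite stepA.
apply: (@le_trans _ _ (\sum_(S' | (S' != S) && (#|S'| == K)) qq ^+ #|DD S S'|)).
  apply: ler_sum => S' /andP[_ /eqP S'K]; exact: pair_bound.
have q0 : 0 <= qq by rewrite /qq invr_ge0 exprn_ge0 ?ler0n.
apply: (@le_trans _ _ (\sum_(S' | S' != S) qq ^+ #|DD S S'|)).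
  rewrite [X in _ <= X](bigID (fun S' : {set 'I_N} => #|S'| == K)) /=.
  by rewrite lerDl sumr_ge0 // => S' _; rewrite exprn_ge0.
rewrite -(sum_DD S qq) [X in _ <= X - 1](bigD1 S) //=.
have -> : DD S S = finset.set0 by apply/finset.setP => x; rewrite /DD !inE; case: (x \in S).
by rewrite cards0 expr0 addrC addrK.
Qed.

Lemma avg_bound (dec : decoder N T) : is_ML_decoder K u dec ->
  (2 <= K)%N -> (1 <= N)%N -> u < 1 ->
  8 * expR 4 * K%:R * ln (N%:R : R) / (1 - u) ^+ 2 <= T%:R ->
  avg_err K u dec <= (1 + qq) ^+ N - 1.
Proof.
move=> ML K2 N1 ult1 hT.
set b := (1 + qq) ^+ N - 1.
have q0 : 0 <= qq by rewrite /qq invr_ge0 exprn_ge0 ?ler0n.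
have b0 : 0 <= b by rewrite /b subr_ge0 exprn_ege1 // lerDl.
apply: (@le_trans _ _ (\sum_(S : {set 'I_N} | #|S| == K) ('C(N, K)%:R)^-1 * b)).
  apply: ler_sum => S /eqP SK; apply: ler_wpM2l; first by rewrite invr_ge0 ler0n.
  exact: S_bound.
have -> : \sum_(S : {set 'I_N} | #|S| == K) ('C(N, K)%:R)^-1 * b
   = (('C(N, K)%:R)^-1 * b) *+ 'C(N, K).
  rewrite (eq_bigl (fun S => S \in [set A : {set 'I_N} | #|A| == K]%SET)); last first.
    by move=> S; rewrite inE.
  by rewrite sumr_const card_draws card_ord.
rewrite -mulr_natl mulrA.
have [->|C0] := eqVneq 'C(N, K) 0%N; first by rewrite mulr0n !mul0r.
by rewrite mulfV ?mul1r // pnatr_eq0.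
Qed.

Lemma qq_bound : (2 <= N)%N -> (1 + qq) ^+ N - 1 <= 2 / N%:R.
Proof.
move=> N2.
have Npos : (0 : R) < N%:R by rewrite ltr0n; apply: leq_trans N2.
have N2r : (2 : R) <= N%:R by rewrite ler_nat.
set x := (N%:R : R)^-1.
have xN : x * N%:R = 1 by rewrite /x mulVf // gt_eqF.
have x0 : 0 < x by rewrite invr_gt0.
have x2 : x <= 1/2 by nra.
have q0 : 0 <= qq by rewrite /qq invr_ge0 exprn_ge0 ?ler0n.
have h1 : (1 + qq) ^+ N <= expR x.
  apply: (@le_trans _ _ (expR qq ^+ N)).
    apply: lerXn2r; rewrite ?nnegrE ?expR_ge0 ?addr_ge0 //; exact: expR_ge1Dx.
  rewrite -expRM_natr.
  have -> : qq * N%:R = x by rewrite /qq /x expr2 invfM -mulrA mulVf ?mulr1 // gt_eqF.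
  exact: lexx.
have h2 : expR x <= 1 + 2 * x.
  have E1 := expR_ge1Dx (- x).
  have E0 := expR_gt0 x.
  have EE := expRxMexpNx_1 x.
  nra.
rewrite -/x; lra.
Qed.

End Model2.


Theorem theorem9 (R : realType) :
  exists C : R, 0 < C /\
  forall (u : R), 0 <= u < 1 ->
  forall (N K T : nat -> nat) (dec : forall n, decoder (N n) (T n)),
    (forall n, is_ML_decoder (K n) u (dec n)) ->
    (forall M : nat, \forall n \near \oo, (M <= N n)%N) ->
    (forall M : nat, \forall n \near \oo, (M <= K n)%N) ->
    ((fun n => (K n)%:R / (N n)%:R : R) @ \oo --> 0) ->
    (forall n, C * (K n)%:R * ln ((N n)%:R) / (1 - u) ^+ 2 <= (T n)%:R) ->
    ((fun n => avg_err (K n) u (dec n)) @ \oo --> 0).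
Proof.
exists (8 * expR 4); split; first by rewrite mulr_gt0 // expR_gt0.
move=> u /andP[u0 ult1] N K T dec ML HN HK _ HT.
have u1 : u <= 1 by apply: ltW.
apply/cvgrPdist_lt => eps e0.
have [M HM] : exists M : nat, 2 / eps < M%:R.
  exists (Num.Def.archi_bound (2 / eps)); apply: archi_boundP.
  by rewrite divr_ge0 // ltW.
apply: filterS2 (HN M.+2) (HK 2%N) => n Nn Kn.
have K1 : (1 <= K n)%N by apply: leq_trans Kn.
have N2 : (2 <= N n)%N by apply: leq_trans Nn.
have N1 : (1 <= N n)%N by apply: leq_trans N2.
have a0 : 0 <= avg_err (K n) u (dec n).
  apply: sumr_ge0 => S _; apply: mulr_ge0; first by rewrite invr_ge0 ler0n.
  apply: sumr_ge0 => X _; apply: mulr_ge0; first exact: (@dp_ge0 R _ _ _ X K1).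
  apply: sumr_ge0 => Y _; apply: mulr_ge0; first exact: (@lik_ge0 R _ _ u u0 u1 X S Y).
  exact: ler0n.
rewrite sub0r normrN ger0_norm //.
apply: (le_lt_trans (@avg_bound R _ _ _ u u0 u1 (dec n) (ML n) Kn N1 ult1 (HT n))).
apply: (le_lt_trans (@qq_bound R _ N2)).
have Npos : (0 : R) < (N n)%:R by rewrite ltr0n.
rewrite ltr_pdivrMr //.
have : (M%:R : R) < (N n)%:R by rewrite ltr_nat; apply: leq_trans Nn.
rewrite ltr_pdivrMr // in HM.
nra.
Qed.
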